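(* Let $F$ be an SCF on $n$ voters and $m\ge 3$ alternatives, and let $G$ be the GSWF defined from $F$ as follows: for alternatives $a\ne b$ and profile $x$, $G^{a,b}(x)=1$ if $\Pr_{x'}[F(x')=a\mid x'^{a,b}=x^{a,b}]>\Pr_{x'}[F(x')=b\mid x'^{a,b}=x^{a,b}]$, $G^{a,b}(x)=0$ if the reverse strict inequality holds, and in case of equality $G^{a,b}(x)$ equals the preference of a fixed voter between $a$ and $b$. Let $N^{a,b}(F)$ be the probability over a uniform profile $x$ that either $F(x)=a$ and $G^{a,b}(x)=0$, or $F(x)=b$ and $G^{a,b}(x)=1$. Then for every pair of distinct alternatives $a,b$, \[ M^{a,b}(F)\ge \big(N^{a,b}(F)\big)^2. \]
   Context: Profiles $x,x'\in(L_m)^n$ are uniformly random ($L_m$ the linear orders on $m$ alternatives). $x^{a,b}\in\{0,1\}^n$ has $x^{a,b}_i=1$ iff voter $i$ ranks $a$ above $b$. $M^{a,b}(F)=\Pr[F(x)=a,\ F(x')=b]$ with $x,x'$ uniform subject to $x^{a,b}=x'^{a,b}$. *)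

(* Defs.v *)
From HB Require Import structures.
From mathcomp Require Import all_boot all_order all_algebra all_fingroup.
Set Implicit Arguments. Unset Strict Implicit. Unset Printing Implicit Defensive.
Import Order.TTheory GRing.Theory Num.Theory.

(* A linear order on the alternatives 'I_m is represented by a permutation
   s : {perm 'I_m}, where s c is the rank (position) of alternative c;
   rank 0 is the top. *)
Notation profile n m := {ffun 'I_n -> {perm 'I_m}}.

Definition prefers m (s : {perm 'I_m}) (a b : 'I_m) : bool := (s a < s b)%N.

Definition pattern n m (x : profile n m) (a b : 'I_m) : {ffun 'I_n -> bool} :=
  [ffun i => prefers (x i) a b].

Local Open Scope ring_scope.

Definition condPr n m (F : profile n m -> 'I_m) (a b : 'I_m)
    (v : {ffun 'I_n -> bool}) (c : 'I_m) : rat :=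
  (#|[set x : profile n m | (pattern x a b == v) && (F x == c)]|%:R)
  / (#|[set x : profile n m | pattern x a b == v]|%:R).

Definition GSWF n m (F : profile n m -> 'I_m) (i0 : 'I_n) (a b : 'I_m)
    (x : profile n m) : bool :=
  let pa := condPr F a b (pattern x a b) a in
  let pb := condPr F a b (pattern x a b) b in
  if pb < pa then true
  else if pa < pb then false
  else prefers (x i0) a b.

Definition Nab n m (F : profile n m -> 'I_m) (i0 : 'I_n) (a b : 'I_m) : rat :=
  (#|[set x : profile n m |
        ((F x == a) && ~~ GSWF F i0 a b x) || ((F x == b) && GSWF F i0 a b x)]|%:R)
  / (#|[set: profile n m]|%:R).

Definition Mab n m (F : profile n m -> 'I_m) (a b : 'I_m) : rat :=
  (#|[set p : profile n m * profile n m |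
        [&& pattern p.1 a b == pattern p.2 a b, F p.1 == a & F p.2 == b]]|%:R)
  / (#|[set p : profile n m * profile n m |
        pattern p.1 a b == pattern p.2 a b]|%:R).

(* Main.v *)
Require Import Defs.
From HB Require Import structures.
From mathcomp Require Import all_boot all_order all_algebra all_fingroup.
From mathcomp Require Import zify.
Import Order.TTheory GRing.Theory Num.Theory.
Local Open Scope ring_scope.
Set Implicit Arguments.

Lemma card_fiber (T U : finType) (A : {set T}) (f : T -> U) :
  #|A| = (\sum_(u : U) #|[set x in A | f x == u]|)%N.
Proof.
rewrite -sum1_card (partition_big f predT) //=.
apply: eq_bigr => u _; rewrite -sum1_card; apply: eq_bigl => x.
by rewrite inE.
Qed.

Arguments card_fiber {T U} A f.

Lemma card_pairs n m (a b : 'I_m) (Q R : pred (profile n m)) :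
  #|[set p : profile n m * profile n m |
      [&& pattern p.1 a b == pattern p.2 a b, Q p.1 & R p.2]]|
  = (\sum_v #|[set x | (pattern x a b == v) && Q x]|
        * #|[set x | (pattern x a b == v) && R x]|)%N.
Proof.
rewrite (card_fiber _ (fun p => pattern p.1 a b)); apply: eq_bigr => v _.
rewrite -cardsX; apply: eq_card => -[x y]; rewrite !inE /=.
case: (pattern x a b =P v) => [->|hx]; case: (pattern y a b =P v) => [->|hy] /=.
- by rewrite eqxx /= andbT.
- by rewrite andbT andbF; apply/negbTE/and3P => -[/eqP e]; case: hy; rewrite e.
- by rewrite !andbF.
- by rewrite !andbF.
Qed.

Definition flip n m (a b : 'I_m) (v w : {ffun 'I_n -> bool}) (x : profile n m)
  : profile n m := [ffun i => if v i == w i then x i else (tperm a b * x i)%g].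

Arguments flip {n m} a b v w x.

Lemma flipK n m (a b : 'I_m) (v w : {ffun 'I_n -> bool}) : cancel (@flip n m a b v w) (flip a b v w).
Proof.
move=> x; apply/ffunP => i; rewrite !ffunE.
by case: (v i == w i) => //; rewrite mulgA tperm2 mul1g.
Qed.

Arguments flipK {n m} a b v w x.

Lemma sv_le n m (a b : 'I_m) (hab : a != b) (v w : {ffun 'I_n -> bool}) :
  (#|[set x : profile n m | pattern x a b == v]|
    <= #|[set x : profile n m | pattern x a b == w]|)%N.
Proof.
rewrite -(card_imset _ (can_inj (flipK a b v w))).
apply: subset_leq_card; apply/subsetP => y /imsetP [x]; rewrite inE => /eqP hx ->.
rewrite inE; apply/eqP/ffunP => i; rewrite !ffunE.
have hvi : prefers (x i) a b = v i by rewrite -hx ffunE.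
case: eqP => [<-//|hne].
rewrite /prefers !permM !tpermL !tpermR.
have hne' : x i a != x i b by rewrite (inj_eq perm_inj).
move: hvi; rewrite /prefers => hvi.
have : (x i b < x i a)%N = ~~ (x i a < x i b)%N.
  have h2 : nat_of_ord (x i a) <> nat_of_ord (x i b).
    by move/val_inj=> e; rewrite e eqxx in hne'.
  by case: ltngtP => //= e; case: h2.
move=> ->; rewrite hvi.
by move: hne; case: (v i); case: (w i).
Qed.

Lemma sum_constT (T : finType) (x : nat) : (\sum_(i : T) x)%N = (#|{: T}| * x)%N.
Proof. by rewrite sum_nat_const. Qed.

Definition gv n m (F : profile n m -> 'I_m) (i0 : 'I_n) (a b : 'I_m) v : bool :=
  let pa := condPr F a b v a in
  let pb := condPr F a b v b in
  if pb < pa then true else if pa < pb then false else v i0.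

Lemma GSWF_gv n m (F : profile n m -> 'I_m) i0 a b x :
  GSWF F i0 a b x = gv F i0 a b (pattern x a b).
Proof. by rewrite /GSWF /gv ffunE. Qed.

Lemma ord_lemma (A B s : nat) (t g : bool) : (A <= s)%N -> (B <= s)%N ->
  g = (if (B%:R / s%:R : rat) < A%:R / s%:R then true
           else if (A%:R / s%:R : rat) < B%:R / s%:R then false else t) ->
  ((if g then B else A) <= A)%N && ((if g then B else A) <= B)%N.
Proof.
move=> hA hB ->.
case: (posnP s) => [s0|sp].
  have -> : A = 0%N by lia.
  have -> : B = 0%N by lia.
  by case: ifP => //; case: ifP.
have hs : (0 : rat) < s%:R^-1 by rewrite invr_gt0 ltr0n.
rewrite !ltr_pM2r // !ltr_nat.
case: (ltngtP B A) => h /=; try lia.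
by case: t; rewrite h leqnn.
Qed.

Unset Implicit Arguments.

Theorem proposition4p6 (n m : nat) (hm : (2 < m)%N)
    (F : profile n m -> 'I_m) (i0 : 'I_n) (a b : 'I_m) (hab : a != b) :
  Nab F i0 a b ^+ 2 <= Mab F a b.
Proof.
set sv := fun v => #|[set x : profile n m | pattern x a b == v]|.
set Av := fun v => #|[set x : profile n m | (pattern x a b == v) && (F x == a)]|.
set Bv := fun v => #|[set x : profile n m | (pattern x a b == v) && (F x == b)]|.
set s0 := sv [ffun _ => true].
have hsv : forall v, sv v = s0.
  by move=> v; apply/eqP; rewrite eqn_leq !sv_le.
set k := #|{: {ffun 'I_n -> bool}}|.
have kp : (0 < k)%N by apply/card_gt0P; exists [ffun _ => true].
have hT : #|[set: profile n m]| = (k * s0)%N.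
  rewrite (card_fiber _ (fun x => pattern x a b)).
  rewrite (eq_bigr (fun _ => s0)); last first.
    move=> v _; rewrite -(hsv v); apply: eq_card => x; by rewrite !inE.
  by rewrite sum_nat_const.
have hMd : #|[set p : profile n m * profile n m |
        pattern p.1 a b == pattern p.2 a b]| = (k * (s0 * s0))%N.
  have e := card_pairs a b (fun _ : profile n m => true) (fun _ => true).
  rewrite (@eq_card _ _ [set p : profile n m * profile n m |
     [&& pattern p.1 a b == pattern p.2 a b, true & true]]); last first.
    by move=> p; rewrite !inE /= andbT.
  rewrite e (eq_bigr (fun _ => s0 * s0)%N) ?sum_nat_const // => v _.
  rewrite -(hsv v); congr (_ * _)%N; apply: eq_card => x; by rewrite !inE andbT.
have hMn : #|[set p : profile n m * profile n m |
        [&& pattern p.1 a b == pattern p.2 a b, F p.1 == a & F p.2 == b]]|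
        = (\sum_v Av v * Bv v)%N.
  exact: (card_pairs a b (fun x => F x == a) (fun x => F x == b)).
set NS := [set x : profile n m |
        ((F x == a) && ~~ GSWF F i0 a b x) || ((F x == b) && GSWF F i0 a b x)].
set c := fun v => #|[set x in NS | pattern x a b == v]|.
have hNn : #|NS| = (\sum_v c v)%N by exact: card_fiber.
have hc : forall v, (c v <= Av v)%N && (c v <= Bv v)%N.
  move=> v.
  have e : [set x in NS | pattern x a b == v] = if gv F i0 a b v
     then [set x | (pattern x a b == v) && (F x == b)]
     else [set x | (pattern x a b == v) && (F x == a)].
    apply/setP => x; case hg: (gv F i0 a b v); rewrite !inE GSWF_gv;
    case: (pattern x a b =P v) => [->|hx]; rewrite ?hg /= ?andbF ?andbT ?orbF //.
  rewrite /c e (fun_if (fun S : {set profile n m} => #|S|)).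
  apply: (@ord_lemma _ _ (sv v) (v i0)).
  - by apply: subset_leq_card; apply/subsetP => x; rewrite !inE => /andP[].
  - by apply: subset_leq_card; apply/subsetP => x; rewrite !inE => /andP[].
  - by [].
have hcAB : forall v, (c v ^ 2 <= Av v * Bv v)%N.
  move=> v; case/andP: (hc v) => h1 h2; rewrite -mulnn; exact: leq_mul.
have hS2 : (\sum_v c v ^ 2 <= \sum_v Av v * Bv v)%N.
  by apply: leq_sum => v _; apply: hcAB.
have hcs : ((\sum_v c v) ^ 2 <= k * \sum_v c v ^ 2)%N.
  have H : (\sum_v \sum_w (2 * (c v * c w)) <=
            \sum_v \sum_w (c v ^ 2 + c w ^ 2))%N.
    apply: leq_sum => v _; apply: leq_sum => w _; have := (nat_AGM2 (c v) (c w)).1; nia.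
  have E1 : (\sum_v \sum_w (2 * (c v * c w)) = 2 * (\sum_v c v) ^ 2)%N.
    rewrite -mulnn big_distrlr /= big_distrr /=; apply: eq_bigr => v _.
    by rewrite big_distrr.
  have E2 : (\sum_v \sum_w (c v ^ 2 + c w ^ 2) = 2 * (k * \sum_v c v ^ 2))%N.
    rewrite (eq_bigr (fun v => k * c v ^ 2 + \sum_w c w ^ 2)%N); last first.
      by move=> v _; rewrite big_split /= sum_constT.
    rewrite big_split /= sum_constT -big_distrr /= -/k; lia.
  rewrite E1 E2 in H; lia.
have hX : ((\sum_v c v) ^ 2 <= k * \sum_v Av v * Bv v)%N.
  apply: (leq_trans hcs); exact: leq_mul.
rewrite /Nab /Mab hT hMd -/NS hNn hMn.
set X := (\sum_v c v)%N in hX *. set Z := (\sum_v Av v * Bv v)%N in hX *.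
case: (posnP s0) => [->|sp].
  by rewrite !muln0 !invr0 !mulr0 expr0n.
have kp' : (0 < k * s0)%N by rewrite muln_gt0 kp sp.
have kp'' : (0 < k * (s0 * s0))%N by rewrite !muln_gt0 kp sp.
rewrite expr_div_n ler_pdivrMr ?exprn_gt0 ?ltr0n // mulrAC ler_pdivlMr ?ltr0n //.
rewrite -!natrX -!natrM ler_nat.
have := leq_mul hX (leqnn (s0 * s0)); rewrite expnMn; nia.
Qed.
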